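(* Let $\mathcal{R}^{rsc}$ be a rich single-crossing domain and $U\subseteq\mathcal{R}^{rsc}$. If $R_0=\inf_{\prec}U$ exists in $\mathcal{R}^{rsc}$, then $R_0$ belongs to the closure of $U$ in the order topology; likewise, if $R^0=\sup_{\prec}U$ exists, then $R^0$ belongs to the closure of $U$.
   Context: $\mathbb{Z}=[0,\infty)\times[0,1]$. Classical preferences, the single-crossing property, rich single-crossing domains $\mathcal{R}^{rsc}$ and the relation $\prec$ are as follows. A classical preference is a complete transitive relation $R$ on $\mathbb{Z}$ (strict part $P$, indifference $I$) that is strictly decreasing in $t$ for every fixed $q$, strictly increasing in $q$ for every fixed $t$, and has closed upper and lower contour sets. Two distinct classical preferences satisfy single-crossing if any indifference set of one meets any indifference set of the other in at most one point. $\mathcal{R}^{rsc}$ is a set of classical preferences, pairwise single-crossing, such that for all $(t',q'),(t'',q'')$ with $t'<t''$, $q'<q''$ some member is indifferent between them. For distinct $R',R''$, $R'\prec R''$ means that for every $z\in\mathbb{Z}$, $\square(z)\cap\{x:xR''z\}\subseteq\square(z)\cap\{x:xR'z\}$, where $\square(z)=\{x: x=z\text{ or } x<z\}$ and $(t',q')<(t'',q'')$ means $t'<t''$ and $q'<q''$. $\prec$ is a linear order on $\mathcal{R}^{rsc}$; $\inf_\prec,\sup_\prec$ are taken w.r.t. it, and $\mathcal{R}^{rsc}$ carries the order topology. *)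

(* Defs.v *)
From Stdlib Require Import Reals.
From Coquelicot Require Import Coquelicot.
Open Scope R_scope.

Definition bundle := (R * R)%type.
Definition inZ (z : bundle) : Prop := 0 <= fst z /\ 0 <= snd z <= 1.

(* A preference: a binary relation on bundles (only its restriction to Z matters). *)
Definition pref := bundle -> bundle -> Prop.

Definition Pstrict (Rr : pref) (x y : bundle) : Prop := Rr x y /\ ~ Rr y x.
Definition Indiff (Rr : pref) (x y : bundle) : Prop := Rr x y /\ Rr y x.

Definition closed_in_Z (S : bundle -> Prop) : Prop :=
  exists C : bundle -> Prop, closed C /\ forall x, S x <-> (inZ x /\ C x).

Definition classical (Rr : pref) : Prop :=
  (forall x y, inZ x -> inZ y -> Rr x y \/ Rr y x) /\
  (forall x y w, inZ x -> inZ y -> inZ w -> Rr x y -> Rr y w -> Rr x w) /\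
  (forall t t' q, 0 <= t -> t < t' -> 0 <= q <= 1 -> Pstrict Rr (t, q) (t', q)) /\
  (forall t q q', 0 <= t -> 0 <= q -> q < q' -> q' <= 1 -> Pstrict Rr (t, q') (t, q)) /\
  (forall z, inZ z ->
     closed_in_Z (fun x => inZ x /\ Rr x z) /\
     closed_in_Z (fun x => inZ x /\ Rr z x)).

Definition single_crossing (R1 R2 : pref) : Prop :=
  forall z1 z2 x y, inZ z1 -> inZ z2 -> inZ x -> inZ y ->
    Indiff R1 x z1 -> Indiff R1 y z1 ->
    Indiff R2 x z2 -> Indiff R2 y z2 -> x = y.

Definition rich_single_crossing (D : pref -> Prop) : Prop :=
  (forall Rr, D Rr -> classical Rr) /\
  (forall R1 R2, D R1 -> D R2 -> R1 <> R2 -> single_crossing R1 R2) /\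
  (forall t' q' t'' q'', inZ (t', q') -> inZ (t'', q'') -> t' < t'' -> q' < q'' ->
     exists Rr, D Rr /\ Indiff Rr (t', q') (t'', q'')).

Definition blt (x z : bundle) : Prop := fst x < fst z /\ snd x < snd z.
Definition box (z : bundle) (x : bundle) : Prop := inZ x /\ (x = z \/ blt x z).

Definition prec (R1 R2 : pref) : Prop :=
  R1 <> R2 /\
  forall z, inZ z -> forall x, box z x -> R2 x z -> R1 x z.

Definition is_inf (D U : pref -> Prop) (R0 : pref) : Prop :=
  D R0 /\
  (forall Rr, U Rr -> R0 = Rr \/ prec R0 Rr) /\
  (forall L, D L -> (forall Rr, U Rr -> L = Rr \/ prec L Rr) -> L = R0 \/ prec L R0).

Definition is_sup (D U : pref -> Prop) (R0 : pref) : Prop :=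
  D R0 /\
  (forall Rr, U Rr -> Rr = R0 \/ prec Rr R0) /\
  (forall M, D M -> (forall Rr, U Rr -> Rr = M \/ prec Rr M) -> R0 = M \/ prec R0 M).

Inductive order_open (D : pref -> Prop) : (pref -> Prop) -> Prop :=
| oo_whole : order_open D D
| oo_lray (a : pref) : D a -> order_open D (fun Rr => D Rr /\ prec a Rr)
| oo_rray (b : pref) : D b -> order_open D (fun Rr => D Rr /\ prec Rr b)
| oo_inter (O1 O2 : pref -> Prop) :
    order_open D O1 -> order_open D O2 -> order_open D (fun Rr => O1 Rr /\ O2 Rr)
| oo_union (F : (pref -> Prop) -> Prop) :
    (forall O, F O -> order_open D O) ->
    order_open D (fun Rr => exists O, F O /\ O Rr).

Definition in_order_closure (D U : pref -> Prop) (R0 : pref) : Prop :=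
  D R0 /\
  forall O, order_open D O -> O R0 -> exists Rr, U Rr /\ O Rr.

(* Main.v *)
Require Import Defs.
From Stdlib Require Import Reals Lra Classical.
From Coquelicot Require Import Coquelicot.
Open Scope R_scope.

Lemma conn (a b : R) (A B : R -> Prop) :
  a <= b -> A a -> B b ->
  (forall s, a <= s <= b -> A s \/ B s) ->
  (forall s, a <= s <= b -> A s -> B s -> False) ->
  (forall s, a <= s <= b -> A s -> exists e, 0 < e /\
     forall s', a <= s' <= b -> Rabs (s' - s) < e -> A s') ->
  (forall s, a <= s <= b -> B s -> exists e, 0 < e /\
     forall s', a <= s' <= b -> Rabs (s' - s) < e -> B s') ->
  False.
Proof.
  intros hab hA hB cov dis oA oB.
  set (E := fun s => a <= s <= b /\ A s).
  assert (bE : bound E) by (exists b; intros s [hs _]; lra).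
  assert (nE : exists x, E x) by (exists a; split; [lra|exact hA]).
  destruct (completeness E bE nE) as [m [ub lub]].
  assert (am : a <= m) by (apply ub; split; [lra|exact hA]).
  assert (mb : m <= b) by (apply lub; intros s [hs _]; lra).
  destruct (cov m (conj am mb)) as [Am|Bm].
  - destruct (Req_dec m b) as [->|mnb].
    + exact (dis b (conj am (Rle_refl b)) Am hB).
    + destruct (oA m (conj am mb) Am) as [e [he Ho]].
      set (s' := Rmin b (m + e/2)).
      assert (Es' : E s').
      { split. unfold s'; split. apply Rmin_glb; lra. apply Rmin_l.
        apply Ho. unfold s'; split. apply Rmin_glb; lra. apply Rmin_l.
        unfold s', Rmin; destruct (Rle_dec b (m + e/2)); apply Rabs_def1; lra. }
      assert (s' <= m) by (apply ub; exact Es').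
      unfold s', Rmin in H; destruct (Rle_dec b (m + e/2)); lra.
  - destruct (oB m (conj am mb) Bm) as [e [he Ho]].
    assert (exists s, E s /\ m - e/2 < s).
    { apply NNPP; intro Hn.
      assert (m <= m - e/2).
      { apply lub; intros s Es. apply Rnot_lt_le; intro hs. apply Hn; exists s; auto. }
      lra. }
    destruct H as [s [[hs As] hs2]].
    assert (s <= m) by (apply ub; split; auto).
    apply (dis s hs As). apply Ho; auto. apply Rabs_def1; lra.
Qed.

Definition Zopen_at (P : bundle -> Prop) (w : bundle) := exists e, 0 < e /\
  forall v, inZ v -> Rabs (fst v - fst w) < e -> Rabs (snd v - snd w) < e -> P v.



Lemma cZ_open (S : bundle -> Prop) (w : bundle) :
  closed_in_Z S -> inZ w -> ~ S w -> Zopen_at (fun v => ~ S v) w.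
Proof.
  intros [C [hC hS]] Zw nS.
  assert (nC : ~ C w) by (intro Cw; apply nS; apply hS; auto).
  assert (L : locally w (fun x => ~ C x)).
  { apply NNPP; intro nL. apply nC. apply hC. exact nL. }
  destruct L as [eps Heps].
  exists eps; split; [apply cond_pos|].
  intros v Zv h1 h2 Sv. apply hS in Sv. destruct Sv as [_ Cv].
  apply (Heps v); [split; simpl; assumption | exact Cv].
Qed.

Lemma Zopen_and (P Q : bundle -> Prop) w :
  Zopen_at P w -> Zopen_at Q w -> Zopen_at (fun v => P v /\ Q v) w.
Proof.
  intros [e1 [h1 H1]] [e2 [h2 H2]]. exists (Rmin e1 e2); split.
  apply Rmin_glb_lt; auto.
  intros v Zv a b. pose proof (Rmin_l e1 e2). pose proof (Rmin_r e1 e2).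
  split; [apply H1|apply H2]; auto; lra.
Qed.

Definition lerp (p0 p1 : bundle) (s : R) : bundle :=
  (fst p0 + s * (fst p1 - fst p0), snd p0 + s * (snd p1 - snd p0)).

Lemma lerp_inZ p0 p1 s : inZ p0 -> inZ p1 -> 0 <= s <= 1 -> inZ (lerp p0 p1 s).
Proof.
  unfold inZ, lerp; simpl. intros [a [b c]] [d [f g]] [h i].
  split; [|split]; nra.
Qed.

Lemma path_open (P : bundle -> Prop) p0 p1 s :
  Zopen_at P (lerp p0 p1 s) -> inZ p0 -> inZ p1 ->
  exists d, 0 < d /\ forall s', 0 <= s' <= 1 -> Rabs (s' - s) < d -> P (lerp p0 p1 s').
Proof.
  intros [e [he H]] Z0 Z1.
  set (K := 1 + Rabs (fst p1 - fst p0) + Rabs (snd p1 - snd p0)).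
  assert (hK : 1 <= K) by (unfold K; pose proof (Rabs_pos (fst p1 - fst p0));
     pose proof (Rabs_pos (snd p1 - snd p0)); lra).
  exists (e / K); split. apply Rdiv_lt_0_compat; lra.
  intros s' hs' hd. apply H. apply lerp_inZ; auto.
  - unfold lerp; simpl.
    replace (fst p0 + s' * (fst p1 - fst p0) - (fst p0 + s * (fst p1 - fst p0)))
      with ((s' - s) * (fst p1 - fst p0)) by ring.
    rewrite Rabs_mult.
    assert (Rabs (fst p1 - fst p0) <= K) by (unfold K; pose proof (Rabs_pos (snd p1 - snd p0)); lra).
    assert (Rabs (s' - s) * K < e).
    { apply (Rmult_lt_compat_r K) in hd; [|lra].
      unfold Rdiv in hd. rewrite Rmult_assoc, Rinv_l in hd by lra. lra. }
    pose proof (Rabs_pos (s' - s)). nra.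
  - unfold lerp; simpl.
    replace (snd p0 + s' * (snd p1 - snd p0) - (snd p0 + s * (snd p1 - snd p0)))
      with ((s' - s) * (snd p1 - snd p0)) by ring.
    rewrite Rabs_mult.
    assert (Rabs (snd p1 - snd p0) <= K) by (unfold K; pose proof (Rabs_pos (fst p1 - fst p0)); lra).
    assert (Rabs (s' - s) * K < e).
    { apply (Rmult_lt_compat_r K) in hd; [|lra].
      unfold Rdiv in hd. rewrite Rmult_assoc, Rinv_l in hd by lra. lra. }
    pose proof (Rabs_pos (s' - s)). nra.
Qed.

Lemma lerp0 p0 p1 : lerp p0 p1 0 = p0.
Proof. destruct p0; unfold lerp; simpl; f_equal; ring. Qed.
Lemma lerp1 p0 p1 : lerp p0 p1 1 = p1.
Proof. destruct p0, p1; unfold lerp; simpl; f_equal; ring. Qed.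

Lemma Zopen_mono (P Q : bundle -> Prop) w :
  Zopen_at P w -> (forall v, inZ v -> P v -> Q v) -> Zopen_at Q w.
Proof. intros [e [he H]] HPQ. exists e; split; auto. Qed.

Section Pref.
Variable Rr : pref.
Hypothesis hc : classical Rr.

Lemma c_total x y : inZ x -> inZ y -> Rr x y \/ Rr y x.
Proof. destruct hc as [h _]; auto. Qed.
Lemma c_refl x : inZ x -> Rr x x.
Proof. intro; destruct (c_total x x); auto. Qed.
Lemma c_trans x y w : inZ x -> inZ y -> inZ w -> Rr x y -> Rr y w -> Rr x w.
Proof. destruct hc as [_ [h _]]; eauto. Qed.
Lemma c_not x y : inZ x -> inZ y -> ~ Rr x y -> Rr y x.
Proof. intros; destruct (c_total x y); tauto. Qed.
Lemma c_tstrict t t' q : 0 <= t -> t < t' -> 0 <= q <= 1 ->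
  Rr (t, q) (t', q) /\ ~ Rr (t', q) (t, q).
Proof. destruct hc as [_ [_ [h _]]]; intros; apply h; auto. Qed.
Lemma c_qstrict t q q' : 0 <= t -> 0 <= q -> q < q' -> q' <= 1 ->
  Rr (t, q') (t, q) /\ ~ Rr (t, q) (t, q').
Proof. destruct hc as [_ [_ [_ [h _]]]]; intros; apply h; auto. Qed.
Lemma c_tle t t' q : 0 <= t -> t <= t' -> 0 <= q <= 1 -> Rr (t, q) (t', q).
Proof.
  intros. destruct (Rle_lt_or_eq_dec _ _ H0) as [h|<-].
  apply c_tstrict; auto. apply c_refl; unfold inZ; simpl; lra.
Qed.
Lemma c_qle t q q' : 0 <= t -> 0 <= q -> q <= q' -> q' <= 1 -> Rr (t, q') (t, q).
Proof.
  intros. destruct (Rle_lt_or_eq_dec _ _ H1) as [h|<-].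
  apply c_qstrict; auto. apply c_refl; unfold inZ; simpl; lra.
Qed.
Lemma op1 z w : inZ z -> inZ w -> ~ Rr w z -> Zopen_at (fun v => ~ Rr v z) w.
Proof.
  intros Zz Zw n. destruct hc as [_ [_ [_ [_ h]]]]. destruct (h z Zz) as [c _].
  apply (Zopen_mono _ _ _ (cZ_open _ w c Zw (fun H => n (proj2 H)))).
  intros v Zv nv rv; apply nv; split; auto.
Qed.
Lemma op2 z w : inZ z -> inZ w -> ~ Rr z w -> Zopen_at (fun v => ~ Rr z v) w.
Proof.
  intros Zz Zw n. destruct hc as [_ [_ [_ [_ h]]]]. destruct (h z Zz) as [_ c].
  apply (Zopen_mono _ _ _ (cZ_open _ w c Zw (fun H => n (proj2 H)))).
  intros v Zv nv rv; apply nv; split; auto.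
Qed.

Lemma ivt w p0 p1 : inZ w -> inZ p0 -> inZ p1 -> Rr p0 w -> Rr w p1 ->
  exists s, 0 <= s <= 1 /\ Rr (lerp p0 p1 s) w /\ Rr w (lerp p0 p1 s).
Proof.
  intros Zw Z0 Z1 h0 h1. apply NNPP; intro Hn.
  apply (conn 0 1 (fun s => ~ Rr w (lerp p0 p1 s)) (fun s => ~ Rr (lerp p0 p1 s) w)).
  - lra.
  - rewrite lerp0; intro h; apply Hn; exists 0; rewrite lerp0; split; [lra|auto].
  - rewrite lerp1; intro h; apply Hn; exists 1; rewrite lerp1; split; [lra|auto].
  - intros s hs. destruct (classic (Rr w (lerp p0 p1 s))); [|auto].
    destruct (classic (Rr (lerp p0 p1 s) w)); [|auto].
    exfalso; apply Hn; exists s; auto.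
  - intros s hs a b. pose proof (lerp_inZ p0 p1 s Z0 Z1 hs).
    destruct (c_total w (lerp p0 p1 s)); auto.
  - intros s hs a. apply (path_open (fun v => ~ Rr w v)); auto. apply op2; auto. apply lerp_inZ; auto.
  - intros s hs a. apply (path_open (fun v => ~ Rr v w)); auto. apply op1; auto. apply lerp_inZ; auto.
Qed.
End Pref.

Definition G (R1 R2 : pref) (w : bundle) :=
  exists x, inZ x /\ blt x w /\ ~ R2 w x /\ ~ R1 x w.
Definition SCp (R1 R2 : pref) := forall v w, inZ v -> inZ w ->
  R1 v w -> R1 w v -> R2 v w -> R2 w v -> v = w.
Definition As (R1 R2 : pref) (tz qz q : R) :=
  exists t, 0 <= t <= tz /\ ~ R2 (tz, qz) (t, q) /\ ~ R1 (t, q) (tz, qz).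

Lemma SCp_sym R1 R2 : SCp R1 R2 -> SCp R2 R1.
Proof. unfold SCp; intros; auto. Qed.

Ltac rmin a b := pose proof (Rmin_l a b); pose proof (Rmin_r a b).

Section Two.
Variables R1 R2 : pref.
Hypothesis h1 : classical R1.
Hypothesis h2 : classical R2.
Hypothesis sc : SCp R1 R2.

Lemma NT w : inZ w -> 0 < fst w -> 0 < snd w -> ~ G R1 R2 w -> ~ G R2 R1 w -> False.
Proof.
  destruct w as [tw qw]; simpl. intros Zw htw hqw nG nH.
  destruct Zw as [_ [_ hq1]]; simpl in hq1.
  assert (Zw : inZ (tw, qw)) by (unfold inZ; simpl; lra).
  assert (n0 : ~ R1 (tw, 0) (tw, qw)) by (apply (c_qstrict R1 h1); lra).
  destruct (op1 R1 h1 (tw, qw) (tw, 0) Zw ltac:(unfold inZ; simpl; lra) n0) as [e [he He]].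
  rmin e tw. assert (0 < Rmin e tw) by (apply Rmin_glb_lt; lra).
  set (t0 := tw - Rmin e tw / 2).
  assert (ht0 : 0 < t0 < tw) by (unfold t0; lra).
  assert (n1 : ~ R1 (t0, 0) (tw, qw)).
  { apply He. unfold inZ; simpl; lra. simpl; apply Rabs_def1; unfold t0; lra.
    simpl; apply Rabs_def1; lra. }
  destruct (ivt R1 h1 (tw, qw) (t0, qw) (t0, 0) Zw ltac:(unfold inZ; simpl; lra)
     ltac:(unfold inZ; simpl; lra)) as [s [hs [i1 i2]]].
  { apply (c_tle R1 h1); lra. }
  { apply (c_not R1 h1); auto; unfold inZ; simpl; lra. }
  assert (E : lerp (t0, qw) (t0, 0) s = (t0, qw - s * qw)) by (unfold lerp; simpl; f_equal; ring).
  rewrite E in i1, i2. set (vq := qw - s * qw) in *.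
  assert (hs0 : s <> 0).
  { intro; subst s. unfold vq in i2. replace (qw - 0 * qw) with qw in i2 by ring.
    apply (c_tstrict R1 h1 t0 tw qw); lra || auto. }
  assert (hvq : 0 <= vq < qw) by (unfold vq; split; nra).
  assert (Zv : inZ (t0, vq)) by (unfold inZ; simpl; lra).
  destruct (classic (R2 (tw, qw) (t0, vq))) as [a|a].
  - destruct (classic (R2 (t0, vq) (tw, qw))) as [b|b].
    + pose proof (sc _ _ Zv Zw i1 i2 b a) as Eq. injection Eq; lra.
    + destruct (op1 R2 h2 (tw, qw) (t0, vq) Zw Zv b) as [e2 [he2 He2]].
      rmin e2 t0. assert (0 < Rmin e2 t0) by (apply Rmin_glb_lt; lra).
      set (d := Rmin e2 t0 / 2).
      apply nH. exists (t0 - d, vq). split; [unfold inZ; simpl; unfold d; lra|].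
      split; [unfold blt; simpl; unfold d; lra|]. split.
      * intro h. apply (c_tstrict R1 h1 (t0 - d) t0 vq); try (unfold d; lra).
        apply (c_trans R1 h1 _ (tw, qw)); auto; unfold inZ; simpl; unfold d; lra.
      * apply He2. unfold inZ; simpl; unfold d; lra.
        simpl; apply Rabs_def1; unfold d; lra. simpl; apply Rabs_def1; lra.
  - destruct (op2 R2 h2 (tw, qw) (t0, vq) Zw Zv a) as [e2 [he2 He2]].
    rmin e2 (tw - t0). assert (0 < Rmin e2 (tw - t0)) by (apply Rmin_glb_lt; lra).
    set (d := Rmin e2 (tw - t0) / 2).
    apply nG. exists (t0 + d, vq). split; [unfold inZ; simpl; unfold d; lra|].
    split; [unfold blt; simpl; unfold d; lra|]. split.
    + apply He2. unfold inZ; simpl; unfold d; lra.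
      simpl; apply Rabs_def1; unfold d; lra. simpl; apply Rabs_def1; lra.
    + intro h. apply (c_tstrict R1 h1 t0 (t0 + d) vq); try (unfold d; lra).
      apply (c_trans R1 h1 _ (tw, qw)); auto; unfold inZ; simpl; unfold d; lra.
Qed.
End Two.

Section Two2.
Variables R1 R2 : pref.
Hypothesis h1 : classical R1.
Hypothesis h2 : classical R2.

Lemma As_disj tz qz q : inZ (tz, qz) -> 0 <= q <= 1 ->
  As R1 R2 tz qz q -> As R2 R1 tz qz q -> False.
Proof.
  intros Zz hq [t [ht [a b]]] [t' [ht' [c d]]].
  assert (Zt : inZ (t, q)) by (unfold inZ; simpl; lra).
  assert (Zt' : inZ (t', q)) by (unfold inZ; simpl; lra).
  destruct (Rle_lt_dec t t') as [l|l].
  - apply b. apply (c_trans R1 h1 _ (t', q)); auto.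
    apply (c_tle R1 h1); lra. apply (c_not R1 h1); auto.
  - apply d. apply (c_trans R2 h2 _ (t, q)); auto.
    apply (c_tle R2 h2); lra. apply (c_not R2 h2); auto.
Qed.

Lemma As_open tz qz a b q : inZ (tz, qz) -> 0 <= a -> b <= 1 -> a <= q <= b ->
  As R1 R2 tz qz q -> exists e, 0 < e /\
     forall s', a <= s' <= b -> Rabs (s' - q) < e -> As R1 R2 tz qz s'.
Proof.
  intros Zz ha hb hq [t [ht [c d]]].
  assert (Zt : inZ (t, q)) by (unfold inZ; simpl; lra).
  destruct (Zopen_and _ _ _ (op2 R2 h2 _ _ Zz Zt c) (op1 R1 h1 _ _ Zz Zt d)) as [e [he He]].
  exists e; split; auto. intros s' hs' hd. exists t; split; auto.
  apply He. unfold inZ; simpl; lra. simpl; apply Rabs_def1; lra. simpl; auto.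
Qed.

Lemma G_open w : inZ w -> G R1 R2 w -> Zopen_at (G R1 R2) w.
Proof.
  intros Zw [x [Zx [bl [a b]]]].
  pose proof (Zopen_and _ _ _ (op1 R2 h2 _ _ Zx Zw a) (op2 R1 h1 _ _ Zx Zw b)) as O.
  destruct O as [e [he He]]. destruct bl as [b1 b2].
  set (e' := Rmin e (Rmin (fst w - fst x) (snd w - snd x))).
  rmin e (Rmin (fst w - fst x) (snd w - snd x)).
  rmin (fst w - fst x) (snd w - snd x).
  assert (0 < e') by (unfold e'; repeat apply Rmin_glb_lt; lra).
  exists e'; split; auto. intros v Zv d1 d2.
  exists x. split; auto. split.
  - apply Rabs_def2 in d1; apply Rabs_def2 in d2. split; unfold e' in *; lra.
  - apply He; auto; unfold e' in *; lra.
Qed.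

End Two2.

Section Two3.
Variables R1 R2 : pref.
Hypothesis h1 : classical R1.
Hypothesis h2 : classical R2.
Hypothesis sc : SCp R1 R2.

Lemma SZcore tz qz tx qa ty qb : inZ (tz, qz) -> inZ (tx, qa) -> inZ (ty, qb) ->
  tx < tz -> qa < qz -> ty < tz -> qb < qz ->
  ~ R2 (tz, qz) (tx, qa) -> ~ R1 (tx, qa) (tz, qz) ->
  ~ R1 (tz, qz) (ty, qb) -> ~ R2 (ty, qb) (tz, qz) -> qa < qb -> False.
Proof.
  intros Zz Zx Zy htx hqa hty hqb a1 a2 b1 b2 hab.
  pose proof Zz as [_ [_ hqz]]; pose proof Zx as [htx0 [hqa0 _]];
  pose proof Zy as [hty0 [hqb0 _]]; simpl in *.
  apply (conn qa qb (As R1 R2 tz qz) (As R2 R1 tz qz)).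
  - lra.
  - exists tx; split; [lra|auto].
  - exists ty; split; [lra|auto].
  - intros q hq. apply NNPP; intro Hn.
    assert (nA : ~ As R1 R2 tz qz q) by tauto.
    assert (nB : ~ As R2 R1 tz qz q) by tauto.
    clear Hn.
    assert (Zq : inZ (tx, q)) by (unfold inZ; simpl; lra).
    assert (Zq' : inZ (tz, q)) by (unfold inZ; simpl; lra).
    assert (c1 : ~ R2 (tz, qz) (tx, q)).
    { intro h. apply a1. apply (c_trans R2 h2 _ (tx, q)); auto.
      apply (c_qle R2 h2); lra. }
    destruct (ivt R2 h2 (tz, qz) (tx, q) (tz, q) Zz Zq Zq') as [s [hs [i1 i2]]].
    { apply (c_not R2 h2); auto. }
    { apply (c_not R2 h2); auto. apply (c_qstrict R2 h2); lra. }
    assert (E : lerp (tx, q) (tz, q) s = (tx + s * (tz - tx), q))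
      by (unfold lerp; simpl; f_equal; ring).
    rewrite E in i1, i2. set (t2 := tx + s * (tz - tx)) in *.
    assert (s <> 0).
    { intro; subst s. apply c1. unfold t2 in i2. replace (tx + 0 * (tz - tx)) with tx in i2 by ring. auto. }
    assert (s <> 1).
    { intro; subst s. unfold t2 in i1. replace (tx + 1 * (tz - tx)) with tz in i1 by ring.
      apply (c_qstrict R2 h2 tz q qz); auto; lra. }
    assert (ht2 : tx < t2 < tz) by (unfold t2; split; nra).
    assert (Zv : inZ (t2, q)) by (unfold inZ; simpl; lra).
    destruct (classic (R1 (tz, qz) (t2, q))) as [c|c].
    + destruct (classic (R1 (t2, q) (tz, qz))) as [d|d].
      * pose proof (sc _ _ Zv Zz d c i1 i2) as Eq. injection Eq; lra.
      * destruct (op1 R1 h1 _ _ Zz Zv d) as [e [he He]].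
        rmin e (t2 - tx). assert (0 < Rmin e (t2 - tx)) by (apply Rmin_glb_lt; lra).
        set (t' := t2 - Rmin e (t2 - tx) / 2).
        apply nA. exists t'. split; [unfold t'; lra|]. split.
        -- intro h. apply (c_tstrict R2 h2 t' t2 q); try (unfold t'; lra).
           apply (c_trans R2 h2 _ (tz, qz)); auto; unfold inZ; simpl; unfold t'; lra.
        -- apply He. unfold inZ; simpl; unfold t'; lra.
           simpl; apply Rabs_def1; unfold t'; lra. simpl; apply Rabs_def1; lra.
    + destruct (op2 R1 h1 _ _ Zz Zv c) as [e [he He]].
      rmin e (tz - t2). assert (0 < Rmin e (tz - t2)) by (apply Rmin_glb_lt; lra).
      set (t' := t2 + Rmin e (tz - t2) / 2).
      apply nB. exists t'. split; [unfold t'; lra|]. split.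
      * apply He. unfold inZ; simpl; unfold t'; lra.
        simpl; apply Rabs_def1; unfold t'; lra. simpl; apply Rabs_def1; lra.
      * intro h. apply (c_tstrict R2 h2 t2 t' q); try (unfold t'; lra).
        apply (c_trans R2 h2 _ (tz, qz)); auto; unfold inZ; simpl; unfold t'; lra.
  - intros q hq. apply (As_disj R1 R2 h1 h2); auto; lra.
  - intros q hq. apply (As_open R1 R2 h1 h2); auto; lra.
  - intros q hq. apply (As_open R2 R1 h2 h1); auto; lra.
Qed.
End Two3.

Lemma SZ R1 R2 (h1 : classical R1) (h2 : classical R2) (sc : SCp R1 R2) z :
  inZ z -> G R1 R2 z -> G R2 R1 z -> False.
Proof.
  destruct z as [tz qz]. intros Zz [x [Zx [[bx1 bx2] [a b]]]] [y [Zy [[by1 by2] [c d]]]].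
  destruct x as [tx qa], y as [ty qb]; simpl in *.
  destruct (total_order_T qa qb) as [[lt|eq]|gt].
  - exact (SZcore R1 R2 h1 h2 sc tz qz tx qa ty qb Zz Zx Zy bx1 bx2 by1 by2 a b c d lt).
  - subst qb. apply (As_disj R1 R2 h1 h2 tz qz qa Zz).
    destruct Zx as [? [? ?]]; simpl in *; lra.
    exists tx; split; auto. destruct Zx; simpl in *; lra.
    exists ty; split; auto. destruct Zy; simpl in *; lra.
  - exact (SZcore R2 R1 h2 h1 (SCp_sym _ _ sc) tz qz ty qb tx qa Zz Zy Zx by1 by2 bx1 bx2 c d a b gt).
Qed.

Lemma getG R1 R2 (h1 : classical R1) (h2 : classical R2) :
  R1 <> R2 -> ~ prec R1 R2 -> exists z, inZ z /\ 0 < fst z /\ 0 < snd z /\ G R1 R2 z.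
Proof.
  intros ne np. apply NNPP; intro Hn. apply np; split; auto.
  intros z Zz x [Zx [->|bl]] r2; [apply c_refl; auto|].
  apply NNPP; intro r1. apply Hn.
  destruct z as [tz qz], x as [tx qx]. destruct bl as [b1 b2]; simpl in *.
  pose proof Zx as [ht [hq _]]; pose proof Zz as [_ [_ hqz]]; simpl in *.
  destruct (op1 R1 h1 _ _ Zz Zx r1) as [e [he He]].
  rmin e (qz - qx). assert (0 < Rmin e (qz - qx)) by (apply Rmin_glb_lt; lra).
  set (d := Rmin e (qz - qx) / 2).
  exists (tz, qz). split; auto. simpl. split; [lra|]. split; [lra|].
  exists (tx, qx + d). split; [unfold inZ; simpl; unfold d; lra|].
  split; [unfold blt; simpl; unfold d; lra|]. split.
  - intro h. apply (c_qstrict R2 h2 tx qx (qx + d)); try (unfold d; lra).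
    apply (c_trans R2 h2 _ (tz, qz)); auto. unfold inZ; simpl; unfold d; lra.
  - apply He. unfold inZ; simpl; unfold d; lra.
    simpl; apply Rabs_def1; lra. simpl; apply Rabs_def1; unfold d; lra.
Qed.

Lemma interior_lerp z1 z2 s : inZ z1 -> inZ z2 -> 0 < fst z1 -> 0 < snd z1 ->
  0 < fst z2 -> 0 < snd z2 -> 0 <= s <= 1 ->
  0 < fst (lerp z1 z2 s) /\ 0 < snd (lerp z1 z2 s).
Proof. intros; unfold lerp; simpl; split; nra. Qed.

Lemma lin R1 R2 (h1 : classical R1) (h2 : classical R2) (sc : SCp R1 R2) :
  R1 <> R2 -> prec R1 R2 \/ prec R2 R1.
Proof.
  intro ne. apply NNPP; intro Hn.
  destruct (getG R1 R2 h1 h2 ne ltac:(tauto)) as [z1 [Z1 [a1 [b1 g1]]]].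
  destruct (getG R2 R1 h2 h1 (not_eq_sym ne) ltac:(tauto)) as [z2 [Z2 [a2 [b2 g2]]]].
  apply (conn 0 1 (fun s => G R1 R2 (lerp z1 z2 s)) (fun s => G R2 R1 (lerp z1 z2 s))).
  - lra.
  - rewrite lerp0; auto.
  - rewrite lerp1; auto.
  - intros s hs. destruct (interior_lerp z1 z2 s) as [p q]; auto.
    apply NNPP; intro H. apply (NT R1 R2 h1 h2 sc (lerp z1 z2 s)); auto.
    apply lerp_inZ; auto.
  - intros s hs. apply (SZ R1 R2 h1 h2 sc). apply lerp_inZ; auto.
  - intros s hs g. apply (path_open (G R1 R2)); auto. apply G_open; auto. apply lerp_inZ; auto.
  - intros s hs g. apply (path_open (G R2 R1)); auto. apply G_open; auto. apply lerp_inZ; auto.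
Qed.

Section Dom.
Variable D : pref -> Prop.
Hypothesis rsc : rich_single_crossing D.

Lemma Dcl R : D R -> classical R.
Proof. destruct rsc as [h _]; auto. Qed.

Lemma Dsc R1 R2 : D R1 -> D R2 -> R1 <> R2 -> SCp R1 R2.
Proof.
  intros d1 d2 ne v w Zv Zw a b c d.
  destruct rsc as [_ [h _]]. apply (h R1 R2 d1 d2 ne w w v w); auto.
  split; auto. split; apply c_refl; auto; apply Dcl; auto.
  split; auto. split; apply c_refl; auto; apply Dcl; auto.
Qed.



Lemma prec_noG R1 R2 w : classical R2 -> inZ w -> prec R1 R2 -> ~ G R1 R2 w.
Proof.
  intros c2 Zw [_ p] [x [Zx [bl [a b]]]]. apply b. apply p; auto.
  split; auto. apply (c_not R2 c2); auto.
Qed.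

Lemma antisym R1 R2 : D R1 -> D R2 -> prec R1 R2 -> prec R2 R1 -> False.
Proof.
  intros d1 d2 p12 p21.
  assert (Zw : inZ (1, 1/2)) by (unfold inZ; simpl; lra).
  apply (NT R1 R2 (Dcl _ d1) (Dcl _ d2) (Dsc _ _ d1 d2 (proj1 p12)) (1, 1/2) Zw);
    simpl; try lra.
  apply prec_noG; auto; apply Dcl; auto.
  apply prec_noG; auto; apply Dcl; auto.
Qed.

Lemma ptrans a b c : D a -> D b -> D c -> prec a b -> prec b c -> prec a c.
Proof.
  intros da db dc pab pbc. split.
  - intro e; subst c. exact (antisym a b da db pab pbc).
  - intros z Zz x bx r. apply (proj2 pab); auto. apply (proj2 pbc); auto.
Qed.

Lemma plin a b : D a -> D b -> a <> b -> prec a b \/ prec b a.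
Proof.
  intros da db ne. apply lin; try (apply Dcl; auto). apply Dsc; auto. auto.
Qed.

Lemma nomax M : D M -> exists R, D R /\ ~ (R = M \/ prec R M).
Proof.
  intro dM. pose proof (Dcl _ dM) as cM.
  assert (Z0 : inZ (0, 0)) by (unfold inZ; simpl; lra).
  assert (Z1 : inZ (1, 0)) by (unfold inZ; simpl; lra).
  assert (n : ~ M (1, 0) (0, 0)) by (apply (c_tstrict M cM); lra).
  destruct (op1 M cM _ _ Z0 Z1 n) as [e [he He]].
  set (dl := Rmin e 1 / 2). rmin e 1.
  assert (0 < Rmin e 1) by (apply Rmin_glb_lt; lra).
  assert (Zz : inZ (1, dl)) by (unfold inZ; simpl; unfold dl; lra).
  assert (Mxz : M (0, 0) (1, dl)).
  { apply (c_not M cM); auto. apply He; auto. simpl; apply Rabs_def1; lra.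
    simpl; apply Rabs_def1; unfold dl; lra. }
  destruct rsc as [_ [_ rich]].
  assert (Zx' : inZ (0, dl / 2)) by (unfold inZ; simpl; unfold dl; lra).
  destruct (rich 0 (dl/2) 1 dl Zx' Zz ltac:(lra) ltac:(unfold dl; lra)) as [R [dR [i1 i2]]].
  pose proof (Dcl _ dR) as cR.
  assert (nR : ~ R (0, 0) (1, dl)).
  { intro h. apply (c_qstrict R cR 0 0 (dl/2)); try (unfold dl; lra).
    apply (c_trans R cR _ (1, dl)); auto. }
  exists R; split; auto. intros [E|p].
  - subst R; auto.
  - apply nR. apply (proj2 p); auto. split; auto. right; split; simpl; unfold dl; lra.
Qed.

Lemma nomin m : D m -> exists R, D R /\ ~ (m = R \/ prec m R).
Proof.
  intro dm. pose proof (Dcl _ dm) as cm.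
  assert (Z0 : inZ (0, 0)) by (unfold inZ; simpl; lra).
  assert (Z1 : inZ (0, 1)) by (unfold inZ; simpl; lra).
  assert (n : ~ m (0, 0) (0, 1)) by (apply (c_qstrict m cm); lra).
  destruct (op2 m cm _ _ Z0 Z1 n) as [e [he He]].
  set (dl := Rmin e 1 / 2). rmin e 1.
  assert (0 < Rmin e 1) by (apply Rmin_glb_lt; lra).
  assert (Zz : inZ (dl, 1)) by (unfold inZ; simpl; unfold dl; lra).
  assert (nm : ~ m (0, 0) (dl, 1)).
  { apply He; auto. simpl; apply Rabs_def1; unfold dl; lra.
    simpl; apply Rabs_def1; lra. }
  destruct rsc as [_ [_ rich]].
  assert (Zx' : inZ (dl / 2, 0)) by (unfold inZ; simpl; unfold dl; lra).
  destruct (rich (dl/2) 0 dl 1 Zx' Zz ltac:(unfold dl; lra) ltac:(lra)) as [R [dR [i1 i2]]].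
  pose proof (Dcl _ dR) as cR.
  assert (yR : R (0, 0) (dl, 1)).
  { apply (c_trans R cR _ (dl/2, 0)); auto. apply (c_tle R cR); unfold dl; lra. }
  exists R; split; auto. intros [E|p].
  - subst R; auto.
  - apply nm. apply (proj2 p); auto. split; auto. right; split; simpl; unfold dl; lra.
Qed.
End Dom.

Inductive oo (D : pref -> Prop) (lt : pref -> pref -> Prop) : (pref -> Prop) -> Prop :=
| oo_whole : oo D lt D
| oo_lray (a : pref) : D a -> oo D lt (fun Rr => D Rr /\ lt a Rr)
| oo_rray (b : pref) : D b -> oo D lt (fun Rr => D Rr /\ lt Rr b)
| oo_inter (O1 O2 : pref -> Prop) :
    oo D lt O1 -> oo D lt O2 -> oo D lt (fun Rr => O1 Rr /\ O2 Rr)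
| oo_union (F : (pref -> Prop) -> Prop) :
    (forall O, F O -> oo D lt O) -> oo D lt (fun Rr => exists O, F O /\ O Rr).

Lemma oo_of D O : order_open D O -> oo D prec O.
Proof.
  induction 1.
  - apply oo_whole.
  - apply oo_lray; auto.
  - apply oo_rray; auto.
  - apply oo_inter; auto.
  - apply oo_union; auto.
Qed.

Lemma oo_flip D lt O : oo D lt O -> oo D (fun a b => lt b a) O.
Proof.
  induction 1.
  - apply oo_whole.
  - exact (oo_rray D (fun a b => lt b a) a H).
  - exact (oo_lray D (fun a b => lt b a) b H).
  - apply oo_inter; auto.
  - apply oo_union; auto.
Qed.

Lemma gen_inf (D U : pref -> Prop) (lt : pref -> pref -> Prop) (R0 : pref) :
  (forall a, ~ lt a a) ->
  (forall a b c, D a -> D b -> D c -> lt a b -> lt b c -> lt a c) ->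
  (forall a b, D a -> D b -> a <> b -> lt a b \/ lt b a) ->
  (forall m, D m -> exists R, D R /\ ~ (R = m \/ lt R m)) ->
  (forall R, U R -> D R) ->
  D R0 ->
  (forall Rr, U Rr -> R0 = Rr \/ lt R0 Rr) ->
  (forall L, D L -> (forall Rr, U Rr -> L = Rr \/ lt L Rr) -> L = R0 \/ lt L R0) ->
  forall O, oo D lt O -> O R0 -> exists Rr, U Rr /\ O Rr.
Proof.
  intros irr tr li nm UD d0 lb glb O HO HR0.
  destruct (classic (U R0)) as [u0|u0]; [exists R0; auto|].
  assert (HU : forall Rr, U Rr -> lt R0 Rr).
  { intros Rr u. destruct (lb Rr u) as [e|l]; auto. subst; contradiction. }
  assert (Inv : (forall R, D R -> lt R0 R -> O R) \/
     (exists b, D b /\ lt R0 b /\ forall R, D R -> lt R0 R -> lt R b -> O R)).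
  { clear u0 HU. induction HO as [|a da|b db|O1 O2 _ IH1 _ IH2|F _ IH].
    - left; auto.
    - left. intros R dR l. destruct HR0 as [_ h]. split; auto. apply (tr a R0 R); auto.
    - right. exists b. destruct HR0; split; auto.
    - destruct HR0 as [o1 o2]. destruct (IH1 o1) as [L1|[b1 [db1 [l1 H1]]]];
        destruct (IH2 o2) as [L2|[b2 [db2 [l2 H2]]]].
      + left; auto.
      + right; exists b2; split; auto.
      + right; exists b1; split; auto.
      + destruct (classic (b1 = b2)) as [e|ne].
        * subst; right; exists b2; split; auto.
        * destruct (li b1 b2 db1 db2 ne) as [l|l].
          -- right; exists b1; split; [auto|split; [auto|]]. intros X dX lX lX'; split; auto.
             apply H2; auto. apply (tr X b1 b2); auto.
          -- right; exists b2; split; [auto|split; [auto|]]. intros X dX lX lX'; split; auto.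
             apply H1; auto. apply (tr X b2 b1); auto.
    - destruct HR0 as [O' [fO o']]. destruct (IH O' fO o') as [L|[b [db [l H]]]].
      + left; intros; exists O'; auto.
      + right; exists b; split; [auto|split; [auto|]]. intros; exists O'; auto. }
  destruct Inv as [L|[b [db [l H]]]].
  - destruct (classic (exists Rr, U Rr)) as [[Rr u]|nu].
    + exists Rr; split; auto.
    + destruct (nm R0 d0) as [R [dR nR]]. exfalso; apply nR. apply glb; auto.
      intros Rr u; exfalso; apply nu; eauto.
  - destruct (classic (forall Rr, U Rr -> b = Rr \/ lt b Rr)) as [lbb|nlb].
    + destruct (glb b db lbb) as [e|l2].
      * subst; exfalso; apply (irr R0); auto.
      * exfalso; apply (irr R0); apply (tr R0 b R0); auto.
    + apply NNPP; intro nn. apply nlb. intros Rr u.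
      destruct (classic (b = Rr)) as [e|ne]; [left; auto|right].
      destruct (li b Rr db (UD _ u) ne) as [l2|l2]; auto.
      exfalso; apply nn; exists Rr; split; [auto|]. apply H; auto.
Qed.

Theorem mainTheorem2 (D : pref -> Prop) (U : pref -> Prop) :
  rich_single_crossing D ->
  (forall Rr, U Rr -> D Rr) ->
  (forall R0, is_inf D U R0 -> in_order_closure D U R0) /\
  (forall R0, is_sup D U R0 -> in_order_closure D U R0).
Proof.
  intros rsc UD. split.
  - intros R0 [d0 [lb glb]]. split; auto. intros O HO HR.
    apply (gen_inf D U prec R0); auto.
    + intros a [ne _]; auto.
    + apply ptrans; auto.
    + apply plin; auto.
    + apply nomax; auto.
    + apply oo_of; auto.
  - intros R0 [d0 [lb glb]]. split; auto. intros O HO HR.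
    apply (gen_inf D U (fun a b => prec b a) R0); auto.
    + intros a [ne _]; auto.
    + intros a b c da db dc p1 p2. apply (ptrans D rsc c b a); auto.
    + intros a b da db ne. destruct (plin D rsc a b da db ne); auto.
    + intros m dm; destruct (nomin D rsc m dm) as [R [dR nR]]; exists R; split; auto.
      intros [e|p]; apply nR; [left; auto|right; auto].
    + intros Rr u. destruct (lb Rr u); auto.
    + intros L dL h. destruct (glb L dL) as [e|p]; auto.
      intros Rr u. destruct (h Rr u); auto.
    + apply oo_flip, oo_of; auto.
Qed.
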